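(* Let $\mathbb{K}$ be a field of characteristic zero, let $t\in\mathbb{K}\setminus\{0,1\}$, and let $\mathfrak{g}$ be a finite-dimensional perfect Lie algebra over $\mathbb{K}$, i.e. $\mathfrak{g}^{(2)}=\mathfrak{g}$. Then $\mathcal{D}(t,1,0)(\mathfrak{g})=\{0\}$.
   Context: For a Lie algebra $\mathfrak{g}=(V,\mu)$, the derived algebra $\mathfrak{g}^{(2)}$ is the linear span of all products $\mu(X,Y)$. $\mathcal{D}(t,1,0)(\mathfrak{g})$ denotes the space of $(t,1,0)$-derivations of $\mathfrak{g}$: linear maps $D:V\to V$ with $tD\mu(X,Y)=\mu(DX,Y)$ for all $X,Y\in V$. *)

(* Defs.v *)
From HB Require Import structures.
From mathcomp Require Import all_boot all_order all_algebra.
Set Implicit Arguments. Unset Strict Implicit. Unset Printing Implicit Defensive.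
Import GRing.Theory.
Local Open Scope ring_scope.

Definition is_lie_bracket (K : fieldType) (V : vectType K) (mu : V -> V -> V) : Prop :=
  [/\ (forall (a : K) (x y z : V), mu (a *: x + y) z = a *: mu x z + mu y z),
      (forall (a : K) (x y z : V), mu x (a *: y + z) = a *: mu x y + mu x z),
      (forall x : V, mu x x = 0) &
      (forall x y z : V, mu x (mu y z) + mu y (mu z x) + mu z (mu x y) = 0)].

Definition in_derived (K : fieldType) (V : vectType K) (mu : V -> V -> V) (v : V) : Prop :=
  exists (n : nat) (c : 'I_n -> K) (x y : 'I_n -> V),
    v = \sum_(i < n) c i *: mu (x i) (y i).

Definition perfect (K : fieldType) (V : vectType K) (mu : V -> V -> V) : Prop :=
  forall v : V, in_derived mu v.

Definition is_t10_derivation (K : fieldType) (V : vectType K) (mu : V -> V -> V)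
    (t : K) (D : 'End(V)) : Prop :=
  forall x y : V, t *: D (mu x y) = mu (D x) y.

(* Main.v *)
Require Import Defs.
From HB Require Import structures.
From mathcomp Require Import all_boot all_order all_algebra.
Local Open Scope ring_scope.
Import GRing.Theory.

Set Implicit Arguments.
Section S.
Variables (K : fieldType) (V : vectType K) (mu : V -> V -> V).
Hypothesis HL : is_lie_bracket mu.

Lemma addl x y z : mu (x + y) z = mu x z + mu y z.
Proof. case: HL => H1 _ _ _. by rewrite -{1}(scale1r x) H1 scale1r. Qed.
Lemma addr x y z : mu z (x + y) = mu z x + mu z y.
Proof. case: HL => _ H2 _ _. by rewrite -{1}(scale1r x) H2 scale1r. Qed.
Lemma mu0l z : mu 0 z = 0.
Proof. by apply/eqP; rewrite -[X in X == _](addrK (mu 0 z)) -addl addr0 subrr. Qed.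
Lemma scl a x z : mu (a *: x) z = a *: mu x z.
Proof. case: HL => H1 _ _ _. by rewrite -(addr0 (a *: x)) H1 mu0l addr0. Qed.
Lemma anti x y : mu x y = - mu y x.
Proof.
case: HL => _ _ H3 _. have := H3 (x + y). rewrite addl !addr !H3 add0r addr0.
by move/eqP; rewrite addr_eq0 => /eqP.
Qed.
Lemma oppl x z : mu (- x) z = - mu x z.
Proof. by rewrite -scaleN1r scl scaleN1r. Qed.

Lemma sum_l n (c : 'I_n -> K) (w : 'I_n -> V) y :
  mu (\sum_(i < n) c i *: w i) y = \sum_(i < n) c i *: mu (w i) y.
Proof.
apply: (big_rec2 (fun a b => mu a y = b)); first exact: mu0l.
by move=> i a b _ <-; rewrite addl scl.
Qed.
End S.
Unset Implicit Arguments.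

Theorem theorem3p3 (K : fieldType) (V : vectType K) (mu : V -> V -> V) (t : K) :
  [pchar K] =i pred0 ->
  t != 0 -> t != 1 ->
  is_lie_bracket mu ->
  perfect mu ->
  forall D : 'End(V), is_t10_derivation mu t D -> D = 0.
Proof.
move=> _ t0 t1 HL Hp D HD.
have Dsw : forall x y, mu x (D y) = t *: D (mu x y).
  move=> x y; rewrite (anti HL) -HD (anti HL y x) linearN scalerN opprK //.
have Dsw2 : forall x y, mu (D x) y = mu x (D y) by move=> x y; rewrite Dsw HD.
pose Q x y z := mu (mu (D x) y) z.
have HQ : forall x y z, t *: (t *: D (mu (mu x y) z)) = Q x y z.
  by move=> x y z; rewrite HD -(scl HL) HD.
have J0 : forall x y z, mu (mu y z) x + mu (mu z x) y + mu (mu x y) z = 0.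
  move=> x y z; have [_ _ _ J] := HL.
  by rewrite (anti HL (mu y z) x) (anti HL (mu z x) y) (anti HL (mu x y) z) -!opprD J oppr0.
have J1 : forall x y z, Q x y z + Q y z x + Q z x y = 0.
  move=> x y z; rewrite -!HQ -!scalerDr -!linearD /= addrC addrA J0.
  by rewrite linear0 !scaler0.
have J2 : forall x y z, Q x y z + t^-1 *: Q y z x + Q z x y = 0.
  move=> x y z. have [_ _ _ J] := HL.
  have := J (D x) y z.
  have -> : mu (D x) (mu y z) = - (t^-1 *: Q y z x).
    by rewrite (anti HL) Dsw -HQ !scalerA mulKf.
  have -> : mu y (mu z (D x)) = - Q z x y.
    by rewrite (anti HL) /Q Dsw2.
  have -> : mu z (mu (D x) y) = - Q x y z by rewrite (anti HL).
  rewrite -!opprD => /eqP; rewrite oppr_eq0 => /eqP <-. by rewrite [RHS]addrC addrA.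
have Q0 : forall x y z, Q x y z = 0.
  move=> x y z; have := J1 z x y; have := J2 z x y.
  rewrite -!addrA ![_ *: Q x y z + _]addrC ![Q x y z + _]addrC !addrA.
  move/eqP; rewrite addr_eq0 => /eqP ->; move/eqP; rewrite addr_eq0 => /eqP/oppr_inj.
  move/eqP; rewrite eq_sym -subr_eq0 -{1}(scale1r (Q x y z)) -scalerBl scaler_eq0 => /orP [|/eqP//].
  by rewrite subr_eq0 eq_sym invr_eq1 (negbTE t1).
have D2 : forall x y z, D (mu (mu x y) z) = 0.
  move=> x y z; have := HQ x y z; rewrite Q0 => /eqP.
  by rewrite !scaler_eq0 (negbTE t0) /= => /eqP.
have D1 : forall x y, D (mu x y) = 0.
  move=> x y; have [n [c [a [b ->]]]] := Hp x.
  rewrite sum_l // linear_sum big1 // => i _; by rewrite linearZ /= D2 scaler0.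
apply/lfunP => v; rewrite lfunE /=; have [n [c [a [b ->]]]] := Hp v.
rewrite linear_sum big1 // => i _; by rewrite linearZ /= D1 scaler0.
Qed.
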